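(* For $a>0$ define $P_1:\mathbb{R}^{3\times3}\to\mathbb{R}$ by $P_1(R)=\sqrt{\|R^TR-I\|_F^2+a}$. Then $P_1$ is twice differentiable with locally Lipschitz second derivatives, and there is a constant $L$ (depending on $a$) such that $P_1$ is $L$-curvature bounded.
   Context: $\|\cdot\|_F$ is the Frobenius norm and $R$ is identified with a vector in $\mathbb{R}^9$. A function $\phi$ is $L$-curvature bounded if $\phi(x)+\frac L2\|x\|^2$ is convex and $\|\nabla\phi(x)-\nabla\phi(x')\|\le L\|x-x'\|$ for all $x,x'$. *)

(* Defs.v *)
From HB Require Import structures.
From mathcomp Require Import all_boot all_order all_algebra.
From mathcomp Require Import all_classical all_reals all_analysis.
Set Implicit Arguments. Unset Strict Implicit. Unset Printing Implicit Defensive.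
Import Order.TTheory GRing.Theory Num.Theory.
Import numFieldNormedType.Exports.
Local Open Scope ring_scope.

Definition frob {R : realType} (A : 'M[R]_3) : R :=
  Num.sqrt (\sum_(i < 3) \sum_(j < 3) A i j ^+ 2).

Definition P1 {R : realType} (a : R) (X : 'M[R]_3) : R :=
  Num.sqrt (frob (X^T *m X - 1%:M) ^+ 2 + a).

Definition grad {R : realType} (f : 'M[R]_3 -> R) (x : 'M[R]_3) : 'M[R]_3 :=
  \matrix_(i, j) ('D_(delta_mx i j) f x).

Definition convex_fun {R : realType} (g : 'M[R]_3 -> R) : Prop :=
  forall (x y : 'M[R]_3) (t : R), 0 <= t -> t <= 1 ->
    g (t *: x + (1 - t) *: y) <= t * g x + (1 - t) * g y.

Definition curvature_bounded {R : realType} (L : R) (phi : 'M[R]_3 -> R) : Prop :=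
  convex_fun (fun x => phi x + L / 2 * frob x ^+ 2) /\
  forall x x' : 'M[R]_3, frob (grad phi x - grad phi x') <= L * frob (x - x').

(* Twice (Frechet) differentiable: f is differentiable everywhere and every
   directional derivative x |-> Df(x)v is differentiable everywhere
   (in finite dimension this is differentiability of x |-> Df(x)). *)
Definition twice_differentiable {R : realType} (f : 'M[R]_3 -> R) : Prop :=
  (forall x, differentiable f x) /\
  (forall (v x : 'M[R]_3), differentiable (fun y => 'D_v f y) x).

Definition locally_lipschitz {R : realType} (g : 'M[R]_3 -> R) : Prop :=
  forall x : 'M[R]_3, exists r : R, exists K : R, 0 < r /\
    forall y z : 'M[R]_3, frob (y - x) < r -> frob (z - x) < r ->
      `|g y - g z| <= K * frob (y - z).

(* Second derivative D^2 f(x)(u,v) = D_u (D_v f)(x) is locally Lipschitz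
   (as a bilinear-form-valued map: equivalently, each of its entries). *)
Definition second_deriv_locally_lipschitz {R : realType} (f : 'M[R]_3 -> R) : Prop :=
  forall u v : 'M[R]_3, locally_lipschitz (fun x => 'D_u (fun y => 'D_v f y) x).

(* Main.v *)
Require Import Defs.
From HB Require Import structures.
From mathcomp Require Import all_boot all_order all_algebra.
From mathcomp Require Import all_classical all_reals all_analysis.
From mathcomp Require Import ring lra.
Import Order.TTheory GRing.Theory Num.Theory.
Import numFieldNormedType.Exports.
Local Open Scope ring_scope.
Set Implicit Arguments. Unset Strict Implicit. Unset Printing Implicit Defensive.

Section Alg.
Variable R : realType.
Implicit Types A B C X u v : 'M[R]_3.

Definition ip A B : R := \sum_i \sum_j A i j * B i j.

Lemma sum_prod (I J : finType) (f : I -> R) (g : J -> R) :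
  \sum_i \sum_j f i * g j = (\sum_i f i) * (\sum_j g j).
Proof. by rewrite mulr_suml; apply: eq_bigr => i _; rewrite mulr_sumr. Qed.

Lemma CSsum (I : finType) (f g : I -> R) :
  (\sum_i f i * g i) ^+ 2 <= (\sum_i f i ^+ 2) * (\sum_i g i ^+ 2).
Proof.
have H : 0 <= \sum_i \sum_j (f i * g j - f j * g i) ^+ 2.
  by apply: sumr_ge0 => i _; apply: sumr_ge0 => j _; exact: sqr_ge0.
have E : \sum_i \sum_j (f i * g j - f j * g i) ^+ 2 =
   2 * ((\sum_i f i ^+ 2) * (\sum_i g i ^+ 2) - (\sum_i f i * g i) ^+ 2).
  transitivity (\sum_i \sum_j (f i ^+ 2 * g j ^+ 2 + g i ^+ 2 * f j ^+ 2
                  - (2 * (f i * g i)) * (f j * g j))).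
    by apply: eq_bigr => i _; apply: eq_bigr => j _; ring.
  under eq_bigr => i _ do rewrite sumrB big_split /=.
  rewrite sumrB big_split /= !sum_prod -mulr_sumr expr2; ring.
move: H; rewrite E pmulr_rge0 // subr_ge0 //.
Qed.

Lemma ipE A B : ip A B = \sum_(p : 'I_3 * 'I_3) A p.1 p.2 * B p.1 p.2.
Proof. by rewrite /ip pair_bigA. Qed.

Lemma ipC A B : ip A B = ip B A.
Proof. by apply: eq_bigr => i _; apply: eq_bigr => j _; rewrite mulrC. Qed.

Lemma ipDl A B C : ip (A + B) C = ip A C + ip B C.
Proof.
rewrite /ip -big_split; apply: eq_bigr => i _; rewrite -big_split.
by apply: eq_bigr => j _; rewrite mxE mulrDl.
Qed.

Lemma ipDr A B C : ip C (A + B) = ip C A + ip C B.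
Proof. by rewrite ipC ipDl !(ipC C). Qed.

Lemma ipZl c A B : ip (c *: A) B = c * ip A B.
Proof.
rewrite /ip mulr_sumr; apply: eq_bigr => i _; rewrite mulr_sumr.
by apply: eq_bigr => j _; rewrite mxE mulrA.
Qed.

Lemma ipZr c A B : ip A (c *: B) = c * ip A B.
Proof. by rewrite ipC ipZl ipC. Qed.

Lemma ipNl A B : ip (- A) B = - ip A B.
Proof. by rewrite -scaleN1r ipZl mulN1r. Qed.

Lemma ipNr A B : ip A (- B) = - ip A B.
Proof. by rewrite ipC ipNl ipC. Qed.

Lemma ipBl A B C : ip (A - B) C = ip A C - ip B C.
Proof. by rewrite ipDl ipNl. Qed.

Lemma ipBr A B C : ip C (A - B) = ip C A - ip C B.
Proof. by rewrite ipDr ipNr. Qed.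

Lemma ip_ge0 A : 0 <= ip A A.
Proof. by apply: sumr_ge0 => i _; apply: sumr_ge0 => j _; rewrite -expr2 sqr_ge0. Qed.

Lemma frob2 A : frob A ^+ 2 = ip A A.
Proof.
rewrite /frob sqr_sqrtr; last by apply: sumr_ge0 => i _; apply: sumr_ge0 => j _; exact: sqr_ge0.
by apply: eq_bigr => i _; apply: eq_bigr => j _; rewrite expr2.
Qed.

Lemma frob_ge0 A : 0 <= frob A.
Proof. exact: sqrtr_ge0. Qed.

Lemma CSip A B : ip A B ^+ 2 <= ip A A * ip B B.
Proof.
have E (C : 'M[R]_3) : \sum_(p : 'I_3 * 'I_3) C p.1 p.2 * C p.1 p.2
    = \sum_(p : 'I_3 * 'I_3) C p.1 p.2 ^+ 2 by apply: eq_bigr => p _; rewrite expr2.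
rewrite !ipE !E; exact: CSsum.
Qed.

Lemma ip_le A B : `|ip A B| <= frob A * frob B.
Proof.
rewrite -ler_sqr ?nnegrE ?mulr_ge0 ?frob_ge0 //.
by rewrite real_normK ?num_real // exprMn !frob2 CSip.
Qed.

Lemma ip_tr A B : ip A^T B^T = ip A B.
Proof.
rewrite /ip exchange_big; apply: eq_bigr => i _; apply: eq_bigr => j _.
by rewrite !mxE.
Qed.

Lemma ip_mul_le A B : ip (A *m B) (A *m B) <= ip A A * ip B B.
Proof.
have -> : ip A A * ip B B = \sum_i \sum_j ((\sum_k A i k ^+ 2) * (\sum_k B k j ^+ 2)).
  rewrite sum_prod; congr (_ * _).
  by rewrite /ip exchange_big; apply: eq_bigr => i _; apply: eq_bigr => k _; rewrite expr2.
apply: ler_sum => i _; apply: ler_sum => j _; rewrite !mxE -expr2.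
exact: CSsum.
Qed.

Lemma frob_mul A B : frob (A *m B) <= frob A * frob B.
Proof.
rewrite -ler_sqr ?nnegrE ?mulr_ge0 ?frob_ge0 //.
by rewrite exprMn !frob2 ip_mul_le.
Qed.

Lemma frob_tr A : frob A^T = frob A.
Proof.
apply/eqP; rewrite -(eqrXn2 (n := 2)) ?frob_ge0 // !frob2 ip_tr //.
Qed.

Lemma ip_self A : ip A A = frob A ^+ 2.
Proof. by rewrite frob2. Qed.

Definition Sm X := X^T *m X - 1%:M.

Lemma trS X : \sum_i Sm X i i = ip X X - 3.
Proof.
rewrite /Sm; under eq_bigr => i _ do rewrite !mxE eqxx /=.
rewrite sumrB sumr_const card_ord; congr (_ - _).
rewrite /ip exchange_big; apply: eq_bigr => i _; apply: eq_bigr => k _.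
by rewrite mxE.
Qed.

Lemma diag_le A : (\sum_i A i i) ^+ 2 <= 3 * ip A A.
Proof.
have H := CSsum (fun _ : 'I_3 => 1) (fun i => A i i).
have E1 : \sum_(i < 3) (1 : R) * A i i = \sum_i A i i.
  by apply: eq_bigr => i _; rewrite mul1r.
have E2 : \sum_(i < 3) (1 : R) ^+ 2 = 3.
  by under eq_bigr => i _ do rewrite expr1n; rewrite sumr_const card_ord.
rewrite E1 E2 in H; apply: le_trans H _.
rewrite ler_pM2l // /ip; apply: ler_sum => i _.
rewrite (bigD1 i) //= expr2 lerDl; apply: sumr_ge0 => j _; rewrite -expr2 sqr_ge0 //.
Qed.

End Alg.

Section DDsec.
Variable R : realType.
Notation M := ('M[R]_3).

Definition DD (f : M -> R) (df : M -> M -> R) :=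
  forall x, differentiable f x /\ forall v, 'D_v f x = df x v.

Lemma DD_is_derive f df x v : DD f df -> is_derive x v f (df x v).
Proof.
move=> /(_ x) [d e]; apply: DeriveDef; last exact: e.
exact: diff_derivable.
Qed.

Lemma DD_ext f df df' : DD f df -> (forall x v, df x v = df' x v) -> DD f df'.
Proof. by move=> H E x; have [d e] := H x; split => // v; rewrite e E. Qed.

Lemma DD_extf f g df : DD f df -> (forall x, f x = g x) -> DD g df.
Proof. by move=> H E; have -> : g = f by apply/funext => x; rewrite E. Qed.

Lemma DD_cst (c : R) : DD (fun _ => c) (fun _ _ => 0).
Proof.
move=> x; split; first exact: differentiable_cst.
by move=> v; have := derive_cst c x v.
Qed.

Lemma DD_coord i j : DD (fun y : M => y i j) (fun _ v => v i j).
Proof.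
move=> x; split; first exact: differentiable_coord.
move=> v; have := derive_mx (@derivable_id _ _ x v).
rewrite derive_id => /(congr1 (fun N : M => N i j)); rewrite mxE => <-.
by [].
Qed.

Lemma DD_add f g df dg : DD f df -> DD g dg ->
  DD (fun y => f y + g y) (fun x v => df x v + dg x v).
Proof.
move=> Hf Hg x; have [d1 e1] := Hf x; have [d2 e2] := Hg x; split.
  by have := differentiableD d1 d2.
move=> v; rewrite -e1 -e2; have := deriveD (diff_derivable (v:=v) d1) (diff_derivable (v:=v) d2).
by [].
Qed.

Lemma DD_opp f df : DD f df -> DD (fun y => - f y) (fun x v => - df x v).
Proof.
move=> Hf x; have [d1 e1] := Hf x; split.
  by have := differentiableN d1.
move=> v; rewrite -e1; have := deriveN (diff_derivable (v:=v) d1).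
by [].
Qed.

Lemma DD_sub f g df dg : DD f df -> DD g dg ->
  DD (fun y => f y - g y) (fun x v => df x v - dg x v).
Proof. by move=> Hf Hg; apply: DD_add => //; apply: DD_opp. Qed.

Lemma DD_mul f g df dg : DD f df -> DD g dg ->
  DD (fun y => f y * g y) (fun x v => df x v * g x + f x * dg x v).
Proof.
move=> Hf Hg x; have [d1 e1] := Hf x; have [d2 e2] := Hg x; split.
  by have := differentiableM d1 d2.
move=> v; rewrite -e1 -e2; have := deriveM (diff_derivable (v:=v) d1) (diff_derivable (v:=v) d2).
move=> ->; rewrite /GRing.scale /=; ring.
Qed.

Lemma DD_sum n (F : 'I_n -> M -> R) dF : (forall k, DD (F k) (dF k)) ->
  DD (fun y => \sum_k F k y) (fun x v => \sum_k dF k x v).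
Proof.
move=> H x; split.
  have := differentiable_sum (f := F) (fun k => (H k x).1).
  by have -> : (\sum_(i < n) F i) = (fun y => \sum_k F k y) by apply/funext => y; rewrite fct_sumE.
move=> v; have := is_derive_sum (h := F) (fun k => DD_is_derive x v (H k)).
have -> : (\sum_(i < n) F i) = (fun y => \sum_k F k y) by apply/funext => y; rewrite fct_sumE.
by move=> D; rewrite derive_val.
Qed.

Lemma DD_inv f df : DD f df -> (forall x, f x != 0) ->
  DD (fun y => (f y)^-1) (fun x v => - (f x) ^- 2 * df x v).
Proof.
move=> Hf nz x; have [d1 e1] := Hf x; split.
  exact: differentiableV.
by move=> v; rewrite -e1 deriveV //; apply: diff_derivable.
Qed.

Lemma DD_sqrt f df : DD f df -> (forall x, 0 < f x) ->
  DD (fun y => Num.sqrt (f y)) (fun x v => df x v / (2 * Num.sqrt (f x))).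
Proof.
move=> Hf pos x; have [d1 e1] := Hf x.
have ds : differentiable (@Num.sqrt R) (f x).
  apply/derivable1_diffP; have [] := is_derive1_sqrt (pos x); exact.
have dc : differentiable (Num.sqrt \o f) x by exact: differentiable_comp.
split; first exact: dc.
move=> v; rewrite -e1 (deriveE v dc) (diff_comp d1 ds) /= diff1E // -deriveE //.
have := is_derive1_sqrt (pos x) => Hs; rewrite derive1E derive_val.
by [].
Qed.

End DDsec.

Section DDm.
Variable R : realType.
Notation M := ('M[R]_3).

Definition DDm (F : M -> M) (dF : M -> M -> M) :=
  forall i j, DD (fun y => F y i j) (fun x v => dF x v i j).

Lemma DDm_id : DDm id (fun _ v => v).
Proof. by move=> i j; exact: DD_coord. Qed.

Lemma DDm_cst (C : M) : DDm (fun _ => C) (fun _ _ => 0).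
Proof. by move=> i j; apply: DD_ext (DD_cst _) _ => x v; rewrite mxE. Qed.

Lemma DDm_tr F dF : DDm F dF -> DDm (fun y => (F y)^T) (fun x v => (dF x v)^T).
Proof.
move=> H i j; apply: DD_extf; first apply: DD_ext (H j i) _.
  by move=> x v; rewrite mxE.
by move=> x; rewrite mxE.
Qed.

Lemma DDm_add F G dF dG : DDm F dF -> DDm G dG ->
  DDm (fun y => F y + G y) (fun x v => dF x v + dG x v).
Proof.
move=> H1 H2 i j; apply: DD_extf; first apply: DD_ext (DD_add (H1 i j) (H2 i j)) _.
  by move=> x v; rewrite mxE.
by move=> x; rewrite mxE.
Qed.

Lemma DDm_sub F G dF dG : DDm F dF -> DDm G dG ->
  DDm (fun y => F y - G y) (fun x v => dF x v - dG x v).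
Proof.
move=> H1 H2 i j; apply: DD_extf; first apply: DD_ext (DD_sub (H1 i j) (H2 i j)) _.
  by move=> x v; rewrite !mxE.
by move=> x; rewrite !mxE.
Qed.

Lemma DDm_mul F G dF dG : DDm F dF -> DDm G dG ->
  DDm (fun y => F y *m G y) (fun x v => dF x v *m G x + F x *m dG x v).
Proof.
move=> H1 H2 i j; apply: DD_extf.
  apply: DD_ext (DD_sum (fun k => DD_mul (H1 i k) (H2 k j))) _.
  by move=> x v; rewrite !mxE -big_split.
by move=> x; rewrite !mxE.
Qed.

Lemma DD_ip F G dF dG : DDm F dF -> DDm G dG ->
  DD (fun y => ip (F y) (G y)) (fun x v => ip (dF x v) (G x) + ip (F x) (dG x v)).
Proof.
move=> H1 H2; apply: DD_ext.
  apply: DD_sum => i; apply: DD_sum => j; exact: DD_mul (H1 i j) (H2 i j).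
by move=> x v; rewrite /ip -big_split; apply: eq_bigr => i _; rewrite -big_split.
Qed.

End DDm.

Section Fun.
Variable R : realType.
Variable a : R.
Hypothesis ha : 0 < a.
Notation M := ('M[R]_3).

Definition dS (X v : M) := v^T *m X + X^T *m v.
Definition dS2 (u v : M) := v^T *m u + u^T *m v.
Definition q (X : M) := ip (Sm X) (Sm X) + a.
Definition dq (X v : M) := ip (dS X v) (Sm X) + ip (Sm X) (dS X v).
Definition ddq (X u v : M) := ip (dS2 u v) (Sm X) + ip (dS X v) (dS X u)
   + (ip (dS X u) (dS X v) + ip (Sm X) (dS2 u v)).
Definition sq X := Num.sqrt (q X).
Definition ir X := (sq X)^-1.
Definition D1 X v := dq X v * ir X / 2.
Definition D2 X u v := ddq X u v * ir X / 2 - dq X u * dq X v * ir X ^+ 3 / 4.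

Lemma DDm_S : DDm (@Sm R) dS.
Proof.
have H := DDm_sub (DDm_mul (DDm_tr (@DDm_id R)) (@DDm_id R)) (DDm_cst 1%:M).
move=> i j; apply: DD_ext (H i j) _ => x v; by rewrite /dS subr0.
Qed.

Lemma DDm_dS v : DDm (fun y => dS y v) (fun _ u => dS2 u v).
Proof.
have H := DDm_add (DDm_mul (DDm_cst v^T) (@DDm_id R)) (DDm_mul (DDm_tr (@DDm_id R)) (DDm_cst v)).
move=> i j; apply: DD_ext (H i j) _ => x u.
by rewrite /dS2 mul0mx add0r mulmx0 addr0.
Qed.

Lemma DD_q : DD q dq.
Proof.
apply: DD_ext (DD_add (DD_ip DDm_S DDm_S) (DD_cst a)) _ => x v.
by rewrite addr0.
Qed.

Lemma q_pos x : 0 < q x.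
Proof. by rewrite /q ltr_wpDl // ip_ge0. Qed.

Lemma sq_pos x : 0 < sq x.
Proof. by rewrite sqrtr_gt0 q_pos. Qed.

Lemma sq_neq0 x : sq x != 0.
Proof. by rewrite gt_eqF // sq_pos. Qed.

Lemma DD_sq : DD sq (fun x v => dq x v / (2 * sq x)).
Proof. exact: DD_sqrt DD_q q_pos. Qed.

Lemma DD_ir : DD ir (fun x v => - (sq x)^-2 * (dq x v / (2 * sq x))).
Proof. by apply: DD_inv DD_sq _ => x; exact: sq_neq0. Qed.

Lemma DD_dq v : DD (fun y => dq y v) (fun x u => ddq x u v).
Proof. exact: DD_add (DD_ip (DDm_dS v) DDm_S) (DD_ip DDm_S (DDm_dS v)). Qed.

Lemma DD_D1 v : DD (fun y => D1 y v) (fun x u => D2 x u v).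
Proof.
apply: DD_ext (DD_mul (DD_mul (DD_dq v) DD_ir) (DD_cst 2^-1)) _ => x u.
rewrite /D2 /ir; have := sq_neq0 x; move: (sq x) => s hs.
by field.
Qed.

Lemma P1E X : P1 a X = sq X.
Proof. by rewrite /P1 frob2. Qed.

Lemma DD_P1 : DD (P1 a) D1.
Proof.
apply: DD_extf; last by move=> x; rewrite P1E.
apply: DD_ext DD_sq _ => x v; rewrite /D1 /ir; have := sq_neq0 x.
move: (sq x) => s hs; by field.
Qed.
End Fun.

Section LLsec.
Variable R : realType.
Notation M := ('M[R]_3).
Implicit Types f g : M -> R.

Definition LLn g := forall x : M, exists r : R, exists K : R, 0 < r /\ 0 <= K /\
    forall y z : M, frob (y - x) < r -> frob (z - x) < r ->
      `|g y - g z| <= K * frob (y - z).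

Lemma LLnP g : locally_lipschitz g -> LLn g.
Proof.
move=> H x; have [r [K [r0 HK]]] := H x; exists r, `|K|; split => //; split => //.
move=> y z hy hz; apply: le_trans (HK y z hy hz) _.
by rewrite ler_wpM2r ?frob_ge0 // ler_norm.
Qed.

Lemma LLnW g : LLn g -> locally_lipschitz g.
Proof. by move=> H x; have [r [K [r0 [_ HK]]]] := H x; exists r, K. Qed.

Lemma LL_ext f g : LLn f -> (forall x, f x = g x) -> LLn g.
Proof. by move=> H E; have -> : g = f by apply/funext => x; rewrite E. Qed.

Lemma LL_cst c : LLn (fun _ => c).
Proof.
move=> x; exists 1, 0; split => //; split => // y z _ _.
by rewrite subrr normr0 mul0r.
Qed.

Lemma entry_le (A : M) i j : `|A i j| <= frob A.
Proof.
rewrite -ler_sqr ?nnegrE ?frob_ge0 // real_normK ?num_real // frob2 /ip.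
rewrite (bigD1 i) //= (bigD1 j) //= expr2 -addrA lerDl.
apply: addr_ge0; first by apply: sumr_ge0 => k _; rewrite -expr2 sqr_ge0.
by apply: sumr_ge0 => k _; apply: sumr_ge0 => l _; rewrite -expr2 sqr_ge0.
Qed.

Lemma LL_coord i j : LLn (fun y : M => y i j).
Proof.
move=> x; exists 1, 1; split => //; split => // y z _ _.
by rewrite mul1r; have := entry_le (y - z) i j; rewrite !mxE.
Qed.

Lemma LL_add f g : LLn f -> LLn g -> LLn (fun y => f y + g y).
Proof.
move=> Hf Hg x; have [r1 [K1 [r10 [K10 H1]]]] := Hf x.
have [r2 [K2 [r20 [K20 H2]]]] := Hg x.
exists (Order.min r1 r2), (K1 + K2); split; first by rewrite lt_min r10 r20.
split; first by rewrite addr_ge0.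
move=> y z; rewrite !lt_min => /andP[y1 y2] /andP[z1 z2].
rewrite (_ : _ - _ = (f y - f z) + (g y - g z)); last by ring.
apply: le_trans (ler_normD _ _) _; rewrite mulrDl.
by apply: lerD; [exact: H1|exact: H2].
Qed.

Lemma LL_opp f : LLn f -> LLn (fun y => - f y).
Proof.
move=> Hf x; have [r [K [r0 [K0 H]]]] := Hf x; exists r, K; split => //; split => //.
by move=> y z hy hz; rewrite -opprD normrN; exact: H.
Qed.

Lemma LL_sub f g : LLn f -> LLn g -> LLn (fun y => f y - g y).
Proof. by move=> Hf Hg; apply: LL_add => //; exact: LL_opp. Qed.

Lemma frob0 : frob (0 : M) = 0.
Proof.
apply/eqP; rewrite -sqrf_eq0 frob2 /ip big1 // => i _; rewrite big1 // => j _.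
by rewrite mxE mul0r.
Qed.

Lemma LL_bound f x r K : 0 <= K -> 
  (forall y z : M, frob (y - x) < r -> frob (z - x) < r -> `|f y - f z| <= K * frob (y - z)) ->
  forall y, frob (y - x) < r -> `|f y| <= `|f x| + K * r.
Proof.
move=> K0 H y hy.
have hx : frob (x - x) < r by rewrite subrr frob0; apply: le_lt_trans hy; exact: frob_ge0.
have := H y x hy hx => h.
rewrite -(subrK (f x) (f y)); apply: le_trans (ler_normD _ _) _.
rewrite addrC lerD2l; apply: le_trans h _.
by rewrite ler_wpM2l // ltW.
Qed.

Lemma LL_mul f g : LLn f -> LLn g -> LLn (fun y => f y * g y).
Proof.
move=> Hf Hg x; have [r1 [K1 [r10 [K10 H1]]]] := Hf x.
have [r2 [K2 [r20 [K20 H2]]]] := Hg x.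
set Bf := `|f x| + K1 * r1; set Bg := `|g x| + K2 * r2.
have Bf0 : 0 <= Bf by rewrite addr_ge0 ?mulr_ge0 // ltW.
have Bg0 : 0 <= Bg by rewrite addr_ge0 ?mulr_ge0 // ltW.
exists (Order.min r1 r2), (Bf * K2 + Bg * K1); split; first by rewrite lt_min r10 r20.
split; first by rewrite addr_ge0 ?mulr_ge0.
move=> y z; rewrite !lt_min => /andP[y1 y2] /andP[z1 z2].
rewrite (_ : _ - _ = f y * (g y - g z) + g z * (f y - f z)); last by ring.
apply: le_trans (ler_normD _ _) _; rewrite mulrDl !normrM -!mulrA.
apply: lerD; apply: ler_pM => //.
- exact: (LL_bound K10 H1 y1).
- exact: H2.
- exact: (LL_bound K20 H2 z2).
- exact: H1.
Qed.

Lemma LL_sum n (F : 'I_n -> M -> R) : (forall k, LLn (F k)) ->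
  LLn (fun y => \sum_k F k y).
Proof.
elim: n F => [|n IH] F H.
  by apply: LL_ext (LL_cst 0) _ => x; rewrite big_ord0.
apply: LL_ext (LL_add (IH (fun k => F (widen_ord (leqnSn n) k)) (fun k => H _)) (H ord_max)) _.
by move=> x; rewrite big_ord_recr.
Qed.

End LLsec.

Section LLir.
Variable R : realType.
Notation M := ('M[R]_3).

Lemma isqrt_lip (a p p' : R) : 0 < a -> a <= p -> a <= p' ->
  `|(Num.sqrt p)^-1 - (Num.sqrt p')^-1| <= `|p - p'| / Num.sqrt a ^+ 3.
Proof.
move=> ha hp hp'.
have b0 : 0 < Num.sqrt a by rewrite sqrtr_gt0.
have bs : Num.sqrt a <= Num.sqrt p by rewrite ler_sqrt ?(le_trans (ltW ha) hp).
have bt : Num.sqrt a <= Num.sqrt p' by rewrite ler_sqrt ?(le_trans (ltW ha) hp').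
have -> : p - p' = (Num.sqrt p - Num.sqrt p') * (Num.sqrt p + Num.sqrt p').
  by rewrite -subr_sqr !sqr_sqrtr // (le_trans (ltW ha)).
move: b0 bs bt; move: (Num.sqrt a) (Num.sqrt p) (Num.sqrt p') => b s t b0 bs bt.
have s0 : 0 < s by apply: lt_le_trans bs.
have t0 : 0 < t by apply: lt_le_trans bt.
have -> : s^-1 - t^-1 = (s - t) * (- (s * t)^-1).
  by field; rewrite ?gt_eqF.
rewrite !normrM normrN -!mulrA; apply: ler_wpM2l => //.
rewrite (@ger0_norm _ (s + t)); last by rewrite addr_ge0 // ltW.
rewrite gtr0_norm; last by rewrite invr_gt0 mulr_gt0.
rewrite -subr_ge0.
have -> : (s + t) / b ^+ 3 - (s * t)^-1 = ((s + t) * (s * t) - b ^+ 3) / (b ^+ 3 * (s * t)).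
  by field; rewrite ?gt_eqF ?expf_gt0 ?mulr_gt0.
apply: divr_ge0; last by rewrite ?mulr_ge0 ?exprn_ge0 ?ltW.
rewrite subr_ge0 (_ : b ^+ 3 = (b * b) * b); last by rewrite !exprS expr0 mulr1 mulrA.
rewrite mulrC; apply: ler_pM.
- exact: ltW.
- by apply: mulr_ge0; apply: ltW.
- by apply: le_trans bs _; rewrite lerDl ltW.
- by apply: ler_pM => //; exact: ltW.
Qed.

Lemma LL_isqrt (g : M -> R) (a : R) : 0 < a -> (forall y, a <= g y) -> LLn g ->
  LLn (fun y => (Num.sqrt (g y))^-1).
Proof.
move=> ha hg Hg x; have [r [K [r0 [K0 H]]]] := Hg x.
exists r, (K / Num.sqrt a ^+ 3); split => //; split.
  by rewrite divr_ge0 ?exprn_ge0 ?sqrtr_ge0.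
move=> y z hy hz; apply: le_trans (isqrt_lip ha (hg y) (hg z)) _.
rewrite mulrAC ler_wpM2r ?invr_ge0 ?exprn_ge0 ?sqrtr_ge0 //.
exact: H.
Qed.

End LLir.

Section LLm.
Variable R : realType.
Notation M := ('M[R]_3).

Definition LLm (F : M -> M) := forall i j, LLn (fun y => F y i j).

Lemma LLm_id : LLm id.
Proof. by move=> i j; exact: LL_coord. Qed.

Lemma LLm_cst (C : M) : LLm (fun _ => C).
Proof. by move=> i j; exact: LL_cst. Qed.

Lemma LLm_tr F : LLm F -> LLm (fun y => (F y)^T).
Proof. by move=> H i j; apply: LL_ext (H j i) _ => x; rewrite mxE. Qed.

Lemma LLm_add F G : LLm F -> LLm G -> LLm (fun y => F y + G y).
Proof. by move=> H1 H2 i j; apply: LL_ext (LL_add (H1 i j) (H2 i j)) _ => x; rewrite mxE. Qed.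

Lemma LLm_sub F G : LLm F -> LLm G -> LLm (fun y => F y - G y).
Proof. by move=> H1 H2 i j; apply: LL_ext (LL_sub (H1 i j) (H2 i j)) _ => x; rewrite !mxE. Qed.

Lemma LLm_mul F G : LLm F -> LLm G -> LLm (fun y => F y *m G y).
Proof.
move=> H1 H2 i j; apply: LL_ext (LL_sum (fun k => LL_mul (H1 i k) (H2 k j))) _.
by move=> x; rewrite mxE.
Qed.

Lemma LL_ip F G : LLm F -> LLm G -> LLn (fun y => ip (F y) (G y)).
Proof.
move=> H1 H2; apply: LL_sum => i; apply: LL_sum => j; exact: LL_mul (H1 i j) (H2 i j).
Qed.

Variable a : R.
Hypothesis ha : 0 < a.

Lemma LLm_S : LLm (@Sm R).
Proof. exact: LLm_sub (LLm_mul (LLm_tr LLm_id) LLm_id) (LLm_cst _). Qed.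

Lemma LLm_dS (v : M) : LLm (fun y => dS y v).
Proof. exact: LLm_add (LLm_mul (LLm_cst _) LLm_id) (LLm_mul (LLm_tr LLm_id) (LLm_cst _)). Qed.

Lemma LL_q : LLn (q a).
Proof. exact: LL_add (LL_ip LLm_S LLm_S) (LL_cst _). Qed.

Lemma q_ge x : a <= q a x.
Proof. by rewrite /q lerDr ip_ge0. Qed.

Lemma LL_ir : LLn (ir a).
Proof. exact: LL_isqrt ha q_ge LL_q. Qed.

Lemma LL_dq (v : M) : LLn (fun y => dq y v).
Proof. exact: LL_add (LL_ip (LLm_dS v) LLm_S) (LL_ip LLm_S (LLm_dS v)). Qed.

Lemma LL_ddq (u v : M) : LLn (fun y => ddq y u v).
Proof.
apply: LL_add; first apply: LL_add.
- exact: LL_ip (LLm_cst _) LLm_S.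
- exact: LL_ip (LLm_dS v) (LLm_dS u).
apply: LL_add; first exact: LL_ip (LLm_dS u) (LLm_dS v).
exact: LL_ip LLm_S (LLm_cst _).
Qed.

Lemma LL_D2 (u v : M) : LLn (fun y => D2 a y u v).
Proof.
apply: LL_sub.
  exact: LL_mul (LL_mul (LL_ddq u v) LL_ir) (LL_cst _).
apply: LL_mul (LL_mul (LL_mul (LL_dq u) (LL_dq v)) _) (LL_cst _).
apply: LL_ext (LL_mul (LL_mul LL_ir LL_ir) LL_ir) _ => x.
by rewrite !exprS expr0 mulr1 mulrA.
Qed.

End LLm.

Section Bound.
Variable R : realType.
Notation M := ('M[R]_3).
Implicit Types A B X u v : M.

Lemma le_eqR (x y : R) : x = y -> x <= y.
Proof. by move=> ->. Qed.

Lemma frobD A B : frob (A + B) <= frob A + frob B.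
Proof.
rewrite -ler_sqr ?nnegrE ?addr_ge0 ?frob_ge0 // frob2 ipDl !ipDr sqrrD !frob2 (ipC B A) mulr2n.
have h := ip_le A B; have h' := ler_norm (ip A B); lra.
Qed.

Lemma frob_dS X v : frob (dS X v) <= 2 * (frob X * frob v).
Proof.
apply: le_trans (frobD _ _) _; rewrite mulr2n mulrDl mul1r.
apply: lerD; apply: le_trans (frob_mul _ _) _; rewrite frob_tr //.
by rewrite mulrC.
Qed.

Lemma frob_dS2 u v : frob (dS2 u v) <= 2 * (frob u * frob v).
Proof.
apply: le_trans (frobD _ _) _; rewrite mulr2n mulrDl mul1r.
apply: lerD; apply: le_trans (frob_mul _ _) _; rewrite frob_tr //.
by rewrite mulrC.
Qed.

Lemma dq_bound X v : `|dq X v| <= 4 * (frob (Sm X) * frob X * frob v).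
Proof.
rewrite /dq; apply: le_trans (ler_normD _ _) _.
have h1 := ip_le (dS X v) (Sm X); have h2 := ip_le (Sm X) (dS X v).
have h3 := frob_dS X v; have s0 := frob_ge0 (Sm X).
have x0 := frob_ge0 X; have v0 := frob_ge0 v; have d0 := frob_ge0 (dS X v).
nra.
Qed.

Lemma ddq_bound X u v : `|ddq X u v| <=
   (4 * frob (Sm X) + 8 * frob X ^+ 2) * (frob u * frob v).
Proof.
rewrite /ddq; apply: le_trans (ler_normD _ _) _.
apply: le_trans (lerD (ler_normD _ _) (ler_normD _ _)) _.
have h1 := ip_le (dS2 u v) (Sm X); have h2 := ip_le (Sm X) (dS2 u v).
have h3 := ip_le (dS X u) (dS X v); have h4 := ip_le (dS X v) (dS X u).
have g1 := frob_dS X u; have g2 := frob_dS X v; have g3 := frob_dS2 u v.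
have s0 := frob_ge0 (Sm X); have x0 := frob_ge0 X; have u0 := frob_ge0 u.
have v0 := frob_ge0 v; have d1 := frob_ge0 (dS X u); have d2 := frob_ge0 (dS X v).
have d3 := frob_ge0 (dS2 u v).
have e1 : frob (dS X u) * frob (dS X v) <= 4 * (frob X ^+ 2 * (frob u * frob v)).
  apply: le_trans (ler_pM d1 d2 g1 g2) _; by rewrite le_eqVlt; apply/orP; left; apply/eqP; ring.
have e2 : frob (dS2 u v) * frob (Sm X) <= 2 * (frob u * frob v) * frob (Sm X).
  by apply: ler_wpM2r.
rewrite (ipC (Sm X)) (ipC (dS X v)).
lra.
Qed.

Variable a : R.
Hypothesis ha : 0 < a.

Definition Lc := 2 + 8 * Num.sqrt (6 + 18 / a).

Lemma Lc_ge0 : 0 <= Lc.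
Proof. by rewrite /Lc addr_ge0 // mulr_ge0 // sqrtr_ge0. Qed.

Lemma D2_bound X u v : `|D2 a X u v| <= Lc * (frob u * frob v).
Proof.
set s := frob (Sm X); set T := frob X ^+ 2; set i := ir a X; set P := frob u * frob v.
set k := 6 + 18 / a; set c := Num.sqrt k.
have s0 : 0 <= s by exact: frob_ge0.
have T0 : 0 <= T by rewrite exprn_ge0 // frob_ge0.
have P0 : 0 <= P by rewrite mulr_ge0 // frob_ge0.
have k0 : 0 <= k by rewrite addr_ge0 // divr_ge0 // ltW.
have c0 : 0 <= c by exact: sqrtr_ge0.
have i0 : 0 < i by rewrite invr_gt0 sq_pos.
have iq : i ^+ 2 * (s ^+ 2 + a) = 1.
  rewrite /i /ir /sq exprVn sqr_sqrtr; last by apply: ltW; exact: q_pos.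
  by rewrite /q /s frob2 mulVf // gt_eqF // ltr_wpDl // ip_ge0.
have hT : T ^+ 2 <= k * (s ^+ 2 + a).
  have h1 := diag_le (Sm X); rewrite trS -!frob2 -/T -/s in h1.
  have -> : k * (s ^+ 2 + a) = 6 * s ^+ 2 + 6 * a + 18 * (s ^+ 2 / a) + 18.
    by rewrite /k; field; rewrite gt_eqF.
  have : 0 <= s ^+ 2 / a by rewrite divr_ge0 ?sqr_ge0 // ltW.
  have := sqr_ge0 (T - 6); have := ha.
  lra.
have si : s * i <= 1.
  have h : (s * i) ^+ 2 <= 1 by rewrite -iq exprMn mulrC ler_wpM2l ?sqr_ge0 // lerDl ltW.
  have : 0 <= s * i by rewrite mulr_ge0 // ltW.
  nra.
have Ti : T * i <= c.
  have Ti0 : 0 <= T * i by rewrite mulr_ge0 // ltW.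
  rewrite -ler_sqr ?nnegrE // /c sqr_sqrtr // exprMn.
  have h := ler_wpM2r (sqr_ge0 i) hT; apply: le_trans h _.
  by rewrite -mulrA (mulrC _ (i ^+ 2)) iq mulr1.
have E : D2 a X u v = ddq X u v * (i / 2) - (dq X u * dq X v) * (i ^+ 3 / 4).
  by rewrite /D2 -/i; ring.
rewrite E; apply: le_trans (ler_normB _ _) _.
rewrite !normrM (gtr0_norm i0) (ger0_norm (x := 2^-1)) ?invr_ge0 //.
rewrite (ger0_norm (x := 4^-1)) ?invr_ge0 //.
have b1 := ddq_bound X u v; have b2 := dq_bound X u; have b3 := dq_bound X v.
have b23 : `|dq X u| * `|dq X v| <= 16 * (s ^+ 2 * T * P).
  apply: le_trans (ler_pM (normr_ge0 _) (normr_ge0 _) b2 b3) _.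
  by apply: le_eqR; rewrite /s /T /P; ring.
rewrite -/s -/T -/P in b1.
have Lce : Lc = 2 + 8 * c by [].
clear E b2 b3; clearbody s T P i c k.
have i2 : 0 <= i * 2^-1 by apply: mulr_ge0; [apply: ltW | rewrite invr_ge0].
have i3 : 0 <= i * (i * i) * 4^-1.
  by apply: mulr_ge0; [apply: mulr_ge0; [apply: ltW| apply: mulr_ge0; apply: ltW] | rewrite invr_ge0].
apply: (@le_trans _ _ ((4 * s + 8 * T) * P * (i * 2^-1) + 16 * (s ^+ 2 * T * P) * (i * (i * i) * 4^-1))).
  by apply: lerD; apply: ler_wpM2r.
have -> : (4 * s + 8 * T) * P * (i * 2^-1) + 16 * (s ^+ 2 * T * P) * (i * (i * i) * 4^-1)
   = P * (2 * (s * i) + 4 * (T * i) + 4 * (T * i) * (s * i) ^+ 2)  by field.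
rewrite [Lc * P]mulrC Lce; apply: ler_wpM2l => //.
have h0 : 0 <= s * i by rewrite mulr_ge0 // ltW.
have h1 : 0 <= T * i by rewrite mulr_ge0 // ltW.
have hx2 : (s * i) ^+ 2 <= 1 by rewrite expr2; apply: mulr_ile1.
have : T * i * (s * i) ^+ 2 <= T * i by apply: ler_piMr.
lra.
Qed.

End Bound.

Section Line.
Variable R : realType.
Notation M := ('M[R]_3).

Lemma line_is_derive (F : M -> R) (x d : M) (s df : R) :
  is_derive (s *: d + x) d F df -> is_derive s 1 (fun t => F (t *: d + x)) df.
Proof.
move=> [ex val].
have E : (fun h : R => h^-1 *: (((fun t => F (t *: d + x)) \o shift s) (h *: 1) - F (s *: d + x)))
  = (fun h : R => h^-1 *: ((F \o shift (s *: d + x)) (h *: d) - F (s *: d + x))).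
  apply/funext => h /=; congr (_ *: (F _ - _)).
  by rewrite /= [h *: 1]mulr1 scalerDl addrA.
split; first by rewrite /derivable E.
by rewrite /derive E.
Qed.

Lemma DD_line (F : M -> R) dF (x d : M) (s : R) : DD F dF ->
  is_derive s 1 (fun t => F (t *: d + x)) (dF (s *: d + x) d).
Proof. by move=> H; apply: line_is_derive; exact: DD_is_derive. Qed.

Lemma DD_line_cont (F : M -> R) dF (x d : M) : DD F dF -> continuous (fun t : R => F (t *: d + x)).
Proof.
move=> H s; have [ex _] := DD_line x d s H.
by apply: differentiable_continuous; apply/derivable1_diffP.
Qed.

End Line.

Section Lin.
Variable R : realType.
Notation M := ('M[R]_3).

Lemma lin_sum (f : M -> R) : (forall c v w, f (c *: v + w) = c * f v + f w) ->
  forall n (F : 'I_n -> M), f (\sum_(i < n) F i) = \sum_(i < n) f (F i).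
Proof.
move=> H.
have f0 : f 0 = 0.
  have := H 1 0 0; rewrite scaler0 addr0 mul1r; lra.
elim=> [|n IH] F; first by rewrite !big_ord0.
rewrite !big_ord_recr /= [X in f X]addrC.
have := H 1 (F ord_max) (\sum_(i < n) F (widen_ord (leqnSn n) i)).
rewrite scale1r mul1r => ->; rewrite IH addrC //.
Qed.

Lemma lin_delta (f : M -> R) : (forall c v w, f (c *: v + w) = c * f v + f w) ->
  forall v, f v = \sum_i \sum_j v i j * f (delta_mx i j).
Proof.
move=> H v; rewrite {1}(matrix_sum_delta v) lin_sum //.
apply: eq_bigr => i _; rewrite lin_sum //; apply: eq_bigr => j _.
have f0 : f 0 = 0.
  have := H 1 0 0; rewrite scaler0 addr0 mul1r; lra.
by move: (H (v i j) (delta_mx i j) 0); rewrite f0 !addr0 => ->.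
Qed.

Lemma dS_lin (X : M) c v w : dS X (c *: v + w) = c *: dS X v + dS X w.
Proof.
rewrite /dS linearD linearZ /= mulmxDl mulmxDr -scalemxAl -scalemxAr scalerDr.
by rewrite addrACA.
Qed.

Lemma dq_lin (X : M) c v w : dq X (c *: v + w) = c * dq X v + dq X w.
Proof. by rewrite /dq dS_lin ipDl ipZl (ipDr _ _ (Sm X)) ipZr; ring. Qed.

Lemma D1_lin (a : R) (X : M) c v w : D1 a X (c *: v + w) = c * D1 a X v + D1 a X w.
Proof. by rewrite /D1 dq_lin; ring. Qed.

End Lin.

Unset Implicit Arguments.

Lemma convex_part (R : realType) (a : R) (ha : 0 < a) :
  convex_fun (fun x => P1 a x + Lc a / 2 * frob x ^+ 2).
Proof.
set L := Lc a.
have Hf2 : DD (fun y : 'M[R]_3 => frob y ^+ 2) (fun z v => ip v z + ip z v).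
  by apply: DD_extf (DD_ip (@DDm_id R) (@DDm_id R)) _ => x; rewrite frob2.
have HG : DD (fun y => P1 a y + L / 2 * frob y ^+ 2) (fun z v => D1 a z v + L * ip z v).
  apply: DD_ext (DD_add (DD_P1 ha) (DD_mul (DD_cst (L / 2)) Hf2)) _ => z v.
  by rewrite (ipC v z); field.
have ip0 (A : 'M[R]_3) : ip A 0 = 0.
  by rewrite /ip big1 // => i _; rewrite big1 // => j _; rewrite mxE mulr0.
have HG2 v : DD (fun z => D1 a z v + L * ip z v) (fun z u => D2 a z u v + L * ip u v).
  apply: DD_ext (DD_add (DD_D1 ha v) (DD_mul (DD_cst L) (DD_ip (@DDm_id R) (DDm_cst v)))) _.
  by move=> z u; rewrite ip0; ring.
move=> y1 y2 t t0 t1.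
set d := y2 - y1.
set f := fun s : R => (P1 a (s *: d + y1) + L / 2 * frob (s *: d + y1) ^+ 2).
have Df (s : R) : is_derive s 1 f (D1 a (s *: d + y1) d + L * ip (s *: d + y1) d).
  exact: (DD_line y1 d s HG).
have EDf : 'D_1 f = fun s => D1 a (s *: d + y1) d + L * ip (s *: d + y1) d.
  by apply/funext => s; have := Df s => Ds; rewrite derive_val.
have DDf (s : R) : is_derive s 1 ('D_1 f) (D2 a (s *: d + y1) d d + L * ip d d).
  by rewrite EDf; exact: (DD_line y1 d s (HG2 d)).
have cf : continuous f := DD_line_cont (x:=y1) (d:=d) HG.
have Ec (u v : R) : conv (Itv01 t0 t1) (u : R^o) v = t * u + (1 - t) * v.
  by [].
have H1 : forall x : R, 0 < x < 1 -> 0 <= 'D_1 ('D_1 f) x.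
  move=> s _; have := DDf s => Ds; rewrite derive_val.
  have hb := D2_bound ha (s *: d + y1) d d.
  move: hb; rewrite ler_norml => /andP[hb _].
  rewrite -frob2 expr2 /L; lra.
have H2 : (f x @[x --> 1^'-] --> f 1)%classic := cvg_at_left_filter (cf 1).
have H3 : (f x @[x --> 0^'+] --> f 0)%classic := cvg_at_right_filter (cf 0).
have H4 : {in `]0, 1[, forall x : R, derivable f x 1} by move=> s _; have [] := Df s.
have H5 : {in `]0, 1[, forall x : R, derivable ('D_1 f) x 1} by move=> s _; have [] := DDf s.
have := second_derivative_convex H1 H2 H3 H4 H5 (Itv01 t0 t1) ler01.
rewrite !Ec /f.
have e1 : (t * 0 + (1 - t) * 1) *: d + y1 = t *: y1 + (1 - t) *: y2.
  by apply/matrixP => i j; rewrite /d !mxE; ring.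
have e0 : 0 *: d + y1 = y1 by rewrite scale0r add0r.
have e2 : 1 *: d + y1 = y2 by rewrite scale1r /d subrK.
by rewrite e1 e0 e2.
Qed.

Theorem lemma9 (R : realType) (a : R) (ha : 0 < a) :
  twice_differentiable (P1 a) /\ second_deriv_locally_lipschitz (P1 a) /\
  exists L : R, curvature_bounded L (P1 a).
Proof.
have HP := DD_P1 ha.
have ED1 (v : 'M[R]_3) : (fun y => 'D_v (P1 a) y) = (fun y => D1 a y v).
  by apply/funext => y; rewrite (HP y).2.
have ED2 (u v : 'M[R]_3) : (fun x => 'D_u (fun y => 'D_v (P1 a) y) x) = (fun x => D2 a x u v).
  by rewrite ED1; apply/funext => x; rewrite (DD_D1 ha v x).2.
split; [split|split].
- by move=> x; exact: (HP x).1.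
- by move=> v x; rewrite ED1; exact: (DD_D1 ha v x).1.
- by move=> u v; rewrite ED2; apply: LLnW; exact: LL_D2.
exists (Lc a); split.
- exact: convex_part.
- move=> x x'.
  have Eg z : grad (P1 a) z = \matrix_(i, j) D1 a z (delta_mx i j).
    by apply/matrixP => i j; rewrite !mxE (HP z).2.
  rewrite !Eg; set w := _ - _.
  have wE i j : w i j = D1 a x (delta_mx i j) - D1 a x' (delta_mx i j) by rewrite /w !mxE.
  have hw : ip w w = D1 a x w - D1 a x' w.
    rewrite (lin_delta (D1_lin a x) w) (lin_delta (D1_lin a x') w) -sumrB /ip.
    apply: eq_bigr => i _; rewrite -sumrB; apply: eq_bigr => j _; rewrite wE; ring.
  set d := x - x'.
  have [c _ hc] := @MVT R (fun s => D1 a (s *: d + x') w) (fun s => D2 a (s *: d + x') d w) 0 1 ltr01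
     (fun s _ => DD_line x' d s (DD_D1 ha w))
     (continuous_subspaceT (DD_line_cont (x:=x') (d:=d) (DD_D1 ha w))).
  rewrite /= scale1r scale0r add0r /d subrK subr0 mulr1 -hw in hc.
  have hb := D2_bound ha (c *: d + x') d w.
  rewrite -hc in hb.
  have hw2 : frob w ^+ 2 <= Lc a * (frob d * frob w).
    by rewrite frob2; apply: le_trans (ler_norm _) hb.
  have := frob_ge0 w; have := frob_ge0 d; have L0 := Lc_ge0 a.
  have : 0 <= Lc a * frob d by rewrite mulr_ge0 // frob_ge0.
  nra.
Qed.
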